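(* Let $U^{(1)},U^{(2)}$ be unitary operators on $\mathbb{C}^2\otimes\mathbb{C}^2$ (first factor the ''environment'', second the ''system''), and define quantum channels on $\mathcal{M}_2(\mathbb{C})$ by $T_j(\rho)=\mathrm{tr}_E\big[U^{(j)}(|0\rangle\langle0|\otimes\rho)U^{(j)\dagger}\big]$ for $j=1,2$, where $\mathrm{tr}_E$ is the partial trace over the first factor, and let $T=\frac12T_1+\frac12T_2$. Let $U_k\in\mathrm{SU}(2)$ and let $|\psi\rangle,|\phi_1\rangle,|\phi_2\rangle\in\mathbb{C}^2$ be unit vectors. Consider five qubits ordered as (ancilla $a$, environment $E$, system $S$, $f_1$, $f_2$) prepared in $|+\rangle|0\rangle|\psi\rangle|\phi_1\rangle|\phi_2\rangle$ with $|+\rangle=\frac{1}{\sqrt2}(|0\rangle+|1\rangle)$, and apply in order: (i) $U_k$ on $S$; (ii) controlled on $a$ being $|1\rangle$, swap qubit $E$ with $f_1$ and qubit $S$ with $f_2$; (iii) $U^{(1)}$ on the pair $(E,S)$ and $U^{(2)}$ on the pair $(f_1,f_2)$ (first listed qubit as first tensor factor); (iv) again, controlled on $a$ being $|1\rangle$, swap $E$ with $f_1$ and $S$ with $f_2$; (v) $U_k^{\dagger}$ on $S$. Then the reduced density matrix of qubit $S$ of the final state (partial trace over $a,E,f_1,f_2$) equals $$U_k^{\dagger}\,T\big(U_k\rho U_k^{\dagger}\big)\,U_k=\tfrac12U_k^{\dagger}T_1(U_k\rho U_k^{\dagger})U_k+\tfrac12U_k^{\dagger}T_2(U_k\rho U_k^{\dagger})U_k,\qquad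 \rho=|\psi\rangle\langle\psi| .$$
   Context: In the paper, $T_1,T_2$ are specific quasi-extreme single-qubit channels with Stinespring unitaries $U^{(1)},U^{(2)}$ and $T$ is the channel $T_t^{(\theta_k)}$, so that the output is the constituent channel $T_t^{(k)}(\rho)=U_k^{\dagger}T_t^{(\theta_k)}(U_k\rho U_k^\dagger)U_k$; the statement above holds for arbitrary two-qubit unitaries as given. $\{|0\rangle,|1\rangle\}$ is the computational basis. *)

(* Defs.v *)
(* Complex scalars: an arbitrary numClosedFieldType C
   (e.g. the complex numbers), conjugation Num.conj. *)
From mathcomp Require Import all_boot all_order all_algebra.
From mathcomp Require Import mxtens.
Set Implicit Arguments. Unset Strict Implicit. Unset Printing Implicit Defensive.
Import Order.TTheory GRing.Theory Num.Theory.
Local Open Scope ring_scope.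

Section QDefs.
Variable C : numClosedFieldType.

Definition adj m n (A : 'M[C]_(m, n)) : 'M[C]_(n, m) := (map_mx Num.conj A)^T.

Definition unitary n (U : 'M[C]_n) : Prop := U *m adj U = 1%:M.

Definition special_unitary (U : 'M[C]_2) : Prop := unitary U /\ \det U = 1.

Definition unit_vec (v : 'cV[C]_2) : Prop := \sum_(i < 2) `|v i 0| ^+ 2 = 1.

Definition proj (v : 'cV[C]_2) : 'M[C]_2 := v *m adj v.

Definition ket0 : 'cV[C]_2 := \col_i (if i == 0 then 1 else 0).

(* two-qubit index (x,y) of C^2 (x) C^2, first factor major (Kronecker) *)
Definition ix2 (x y : 'I_2) : 'I_(2 * 2) := mxtens_index (x, y).

Definition ptrE (M : 'M[C]_(2 * 2)) : 'M[C]_2 :=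
  \matrix_(s, s') \sum_(e < 2) M (ix2 e s) (ix2 e s').

Definition stinespring (U : 'M[C]_(2 * 2)) (rho : 'M[C]_2) : 'M[C]_2 :=
  ptrE (U *m (proj ket0 *t rho) *m adj U).

(* Five-qubit pure states as amplitude functions, qubits ordered
   (a, E, S, f1, f2). *)
Definition state5 := 'I_2 -> 'I_2 -> 'I_2 -> 'I_2 -> 'I_2 -> C.

Definition init5 (psi phi1 phi2 : 'cV[C]_2) : state5 :=
  fun a e s f1 f2 =>
    (sqrtC (2%:R : C))^-1 * ket0 e 0 * psi s 0 * phi1 f1 0 * phi2 f2 0.

Definition gateS (V : 'M[C]_2) (st : state5) : state5 :=
  fun a e s f1 f2 => \sum_(s' < 2) V s s' * st a e s' f1 f2.

Definition gateES (W : 'M[C]_(2 * 2)) (st : state5) : state5 :=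
  fun a e s f1 f2 =>
    \sum_(e' < 2) \sum_(s' < 2) W (ix2 e s) (ix2 e' s') * st a e' s' f1 f2.

Definition gateF (W : 'M[C]_(2 * 2)) (st : state5) : state5 :=
  fun a e s f1 f2 =>
    \sum_(g1 < 2) \sum_(g2 < 2) W (ix2 f1 f2) (ix2 g1 g2) * st a e s g1 g2.

Definition cswap (st : state5) : state5 :=
  fun a e s f1 f2 => if a == 1 then st a f1 f2 e s else st a e s f1 f2.

Definition reducedS (st : state5) : 'M[C]_2 :=
  \matrix_(s, s') \sum_(a < 2) \sum_(e < 2) \sum_(f1 < 2) \sum_(f2 < 2)
      st a e s f1 f2 * Num.conj (st a e s' f1 f2).

End QDefs.

(* Main.v *)
Require Import Defs.
From mathcomp Require Import all_boot all_order all_algebra.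
From mathcomp Require Import mxtens.
From mathcomp Require Import ring.
Set Implicit Arguments. Unset Strict Implicit. Unset Printing Implicit Defensive.
Import Order.TTheory GRing.Theory Num.Theory.
Local Open Scope ring_scope.

Section H.
Variable C : numClosedFieldType.

Lemma big2 (F : 'I_2 -> C) : \sum_(i < 2) F i = F 0 + F 1.
Proof. rewrite big_ord_recl big_ord1; congr (F _ + F _); exact: val_inj. Qed.

Lemma sum4 (F : 'I_(2 * 2) -> C) :
  \sum_(k < 2 * 2) F k = \sum_(e < 2) \sum_(s < 2) F (ix2 e s).
Proof.
rewrite pair_bigA /=.
apply: (reindex (fun p : 'I_2 * 'I_2 => ix2 p.1 p.2)).
exists (@mxtens_unindex 2 2) => [p _|k _].
  by rewrite /ix2 mxtens_indexK; case: p.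
by rewrite /ix2 -surjective_pairing mxtens_unindexK.
Qed.

Definition kron (u v : 'cV[C]_2) : 'cV[C]_(2 * 2) :=
  \col_k (u (mxtens_unindex k).1 0 * v (mxtens_unindex k).2 0).

Lemma kronE u v e s : kron u v (ix2 e s) 0 = u e 0 * v s 0.
Proof. by rewrite /kron mxE /ix2 mxtens_indexK. Qed.

Lemma adjM m n p (A : 'M[C]_(m, n)) (B : 'M[C]_(n, p)) :
  adj (A *m B) = adj B *m adj A.
Proof. by rewrite /adj map_mxM trmx_mul. Qed.

Lemma adjK m n (A : 'M[C]_(m, n)) : adj (adj A) = A.
Proof.
apply/matrixP => i j; rewrite !mxE; exact: conjCK.
Qed.


Lemma reducedS_gateS (V : 'M[C]_2) (st : state5 C) :
  reducedS (gateS V st) = V *m reducedS st *m adj V.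
Proof.
apply/matrixP => s s'; rewrite !mxE /gateS.
under [in RHS]eq_bigr => j _ do rewrite !mxE.
under [in RHS]eq_bigr => j _ do under eq_bigr => i _ do rewrite !mxE.
rewrite !big2 !rmorphD !rmorphM.
ring.
Qed.


Lemma st5_0 (U1 U2 : 'M[C]_(2 * 2)) (Uk : 'M[C]_2) (psi phi1 phi2 : 'cV[C]_2) e s f1 f2 :
  cswap (gateF U2 (gateES U1 (cswap (gateS Uk (init5 psi phi1 phi2))))) 0 e s f1 f2
  = (sqrtC 2%:R)^-1 * (U1 *m kron (ket0 C) (Uk *m psi)) (ix2 e s) 0
      * (U2 *m kron phi1 phi2) (ix2 f1 f2) 0.
Proof.
rewrite /cswap /= /gateF /gateES /gateS /init5 !mxE !sum4 !big2 !kronE !mxE !big2 /=.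
ring.
Qed.

Lemma st5_1 (U1 U2 : 'M[C]_(2 * 2)) (Uk : 'M[C]_2) (psi phi1 phi2 : 'cV[C]_2) e s f1 f2 :
  cswap (gateF U2 (gateES U1 (cswap (gateS Uk (init5 psi phi1 phi2))))) 1 e s f1 f2
  = (sqrtC 2%:R)^-1 * (U1 *m kron phi1 phi2) (ix2 f1 f2) 0
      * (U2 *m kron (ket0 C) (Uk *m psi)) (ix2 e s) 0.
Proof.
rewrite /cswap /= /gateF /gateES /gateS /init5 !mxE !sum4 !big2 !kronE !mxE !big2 /=.
ring.
Qed.


Lemma tens_proj (x : 'cV[C]_2) :
  proj (ket0 C) *t proj x = kron (ket0 C) x *m adj (kron (ket0 C) x).
Proof.
apply/matrixP => i j; rewrite -[i]mxtens_unindexK -[j]mxtens_unindexK; move: (mxtens_unindex i) (mxtens_unindex j) => [i1 i2] [j1 j2].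
rewrite tensmxE /proj !mxE !big_ord1 !mxE !mxtens_indexK /= rmorphM; ring.
Qed.

Lemma stinE (U : 'M[C]_(2 * 2)) (x : 'cV[C]_2) s s' :
  stinespring U (proj x) s s' =
  \sum_(e < 2) (U *m kron (ket0 C) x) (ix2 e s) 0
     * ((U *m kron (ket0 C) x) (ix2 e s') 0)^*.
Proof.
rewrite /stinespring tens_proj !mulmxA -[X in ptrE X](mulmxA _ _ (adj U)) -(adjM U) mxE.
by apply: eq_bigr => e _; rewrite !mxE big_ord1 !mxE.
Qed.

Lemma normU (U : 'M[C]_(2 * 2)) (v : 'cV[C]_(2 * 2)) : unitary U ->
  \sum_(f1 < 2) \sum_(f2 < 2) (U *m v) (ix2 f1 f2) 0 * ((U *m v) (ix2 f1 f2) 0)^*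
  = \sum_(k < 2 * 2) v k 0 * (v k 0)^*.
Proof.
move=> /mulmx1C HU.
rewrite -(sum4 (fun k => (U *m v) k 0 * ((U *m v) k 0)^*)).
have E : forall w : 'cV[C]_(2 * 2), \sum_(k < 2 * 2) w k 0 * (w k 0)^* = (adj w *m w) 0 0.
  move=> w; rewrite mxE; apply: eq_bigr => k _; rewrite !mxE mulrC //.
rewrite !E adjM -mulmxA (mulmxA (adj U)) HU mul1mx //.
Qed.

Lemma norm_kron (u v : 'cV[C]_2) : unit_vec u -> unit_vec v ->
  \sum_(k < 2 * 2) kron u v k 0 * (kron u v k 0)^* = 1.
Proof.
rewrite /unit_vec !big2 !normCK => Hu Hv.
rewrite sum4 !big2 !kronE !rmorphM.
transitivity ((u 0 0 * (u 0 0)^* + u 1 0 * (u 1 0)^*) * (v 0 0 * (v 0 0)^* + v 1 0 * (v 1 0)^*)).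
  ring.
by rewrite Hu Hv mulr1.
Qed.


Lemma stinM (U : 'M[C]_(2 * 2)) (x : 'cV[C]_2) :
  stinespring U (proj x) = \matrix_(s, s')
  \sum_(e < 2) (U *m kron (ket0 C) x) (ix2 e s) 0
     * ((U *m kron (ket0 C) x) (ix2 e s') 0)^*.
Proof. by apply/matrixP => s s'; rewrite stinE mxE. Qed.

Lemma cc : (sqrtC (2%:R : C))^-1 * ((sqrtC (2%:R : C))^-1)^* = 2%:R^-1.
Proof.
rewrite (conj_Creal (x := (sqrtC 2%:R)^-1)); last by rewrite rpredV ger0_real // sqrtC_ge0 ler0n.
by rewrite -expr2 exprVn sqrtCK.
Qed.

End H.

Theorem theorem5 (C : numClosedFieldType)
  (U1 U2 : 'M[C]_(2 * 2)) (Uk : 'M[C]_2) (psi phi1 phi2 : 'cV[C]_2) :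
  unitary U1 -> unitary U2 -> special_unitary Uk ->
  unit_vec psi -> unit_vec phi1 -> unit_vec phi2 ->
  let T := fun rho : 'M[C]_2 =>
    2%:R^-1 *: stinespring U1 rho + 2%:R^-1 *: stinespring U2 rho in
  let final :=
    gateS (adj Uk) (cswap (gateF U2 (gateES U1 (cswap
      (gateS Uk (init5 psi phi1 phi2)))))) in
  reducedS final = adj Uk *m T (Uk *m proj psi *m adj Uk) *m Uk.
Proof.
move=> HU1 HU2 _ _ Hp1 Hp2 T final.
rewrite /final reducedS_gateS adjK; congr (_ *m _ *m _).
have -> : Uk *m proj psi *m adj Uk = proj (Uk *m psi).
  by rewrite /proj adjM !mulmxA.
apply/matrixP => s s'; rewrite /T !stinM !mxE.
rewrite big2.
under eq_bigr => e _ do under eq_bigr => f1 _ do under eq_bigr => f2 _ do rewrite st5_0 st5_0.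
under [X in _ + X]eq_bigr => e _ do under eq_bigr => f1 _ do under eq_bigr => f2 _ do rewrite st5_1 st5_1.
set c := (sqrtC 2%:R)^-1.
set X := U1 *m kron (ket0 C) (Uk *m psi).
set Y := U2 *m kron (ket0 C) (Uk *m psi).
have N1 := normU (kron phi1 phi2) HU1.
have N2 := normU (kron phi1 phi2) HU2.
rewrite norm_kron // in N1 N2.
set Z1 := U1 *m kron phi1 phi2 in N1 *.
set Z2 := U2 *m kron phi1 phi2 in N2 *.
transitivity (c * c^* * (\sum_(e < 2) X (ix2 e s) 0 * (X (ix2 e s') 0)^*)
   * (\sum_(f1 < 2) \sum_(f2 < 2) Z2 (ix2 f1 f2) 0 * (Z2 (ix2 f1 f2) 0)^*)
  + c * c^* * (\sum_(e < 2) Y (ix2 e s) 0 * (Y (ix2 e s') 0)^*)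
   * (\sum_(f1 < 2) \sum_(f2 < 2) Z1 (ix2 f1 f2) 0 * (Z1 (ix2 f1 f2) 0)^*)).
  rewrite !big2 !rmorphM; ring.
by rewrite N1 N2 /c cc !mulr1.
Qed.
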